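(* There is an absolute constant $C>0$ such that for all integers $n\ge 3$ and $m$ with $n-1\le m\le (n-1)^2/4$, $$\tilde{r}(\mathcal C_{\mathrm{odd}},\mathcal{C}on_{n,m})\le n+2m+C\sqrt{m-n+1}.$$
   Context: Given nonempty families $\mathcal H_1,\mathcal H_2$ of finite graphs, the online size Ramsey game $\mathcal R(\mathcal H_1,\mathcal H_2)$ is played on the edge set of the infinite complete graph $K_{\mathbb N}$: in each round Builder selects a previously unselected edge and Painter colours it red or blue. The game ends as soon as there is a red copy of some graph in $\mathcal H_1$ or a blue copy of some graph in $\mathcal H_2$. Builder tries to end the game as soon as possible, Painter tries to delay it, and $\tilde r(\mathcal H_1,\mathcal H_2)$ is the number of rounds under optimal play. $\mathcal C_{\mathrm{odd}}$ is the family of all odd cycles and $\mathcal{C}on_{n,m}$ is the family of all connected graphs with exactly $n$ vertices and at least $m$ edges. (The paper states the bound as $n+2m+O(\sqrt{m-n+1})$.) *)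

(* Defs.v *)
From mathcomp Require Import all_boot.
Set Implicit Arguments. Unset Strict Implicit. Unset Printing Implicit Defensive.

(* A finite graph is given on vertex set 'I_k by an adjacency relation.
   A family of finite graphs is a predicate on such graphs. *)
Definition graph_family := forall k : nat, rel 'I_k -> Prop.

Definition simple_graph (k : nat) (adj : rel 'I_k) : Prop :=
  symmetric adj /\ irreflexive adj.

(* Game state: the list of coloured edges selected so far.
   An edge of K_N is stored as (u, v) with u < v; colour true = red,
   false = blue. *)
Definition state := seq (nat * nat * bool).

Definition has_edge (s : state) (c : bool) (x y : nat) : bool :=
  (minn x y, maxn x y, c) \in s.

Definition contains_copy (s : state) (c : bool) (k : nat) (adj : rel 'I_k) : Prop :=
  exists f : 'I_k -> nat, injective f /\
    forall i j, adj i j -> has_edge s c (f i) (f j).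

Definition has_copy (H : graph_family) (s : state) (c : bool) : Prop :=
  exists k (adj : rel 'I_k), H k adj /\ contains_copy s c adj.

Definition game_over (H1 H2 : graph_family) (s : state) : Prop :=
  has_copy H1 s true \/ has_copy H2 s false.

Definition unselected (s : state) (u v : nat) : bool :=
  ((u, v, true) \notin s) && ((u, v, false) \notin s).

Fixpoint builder_wins (H1 H2 : graph_family) (t : nat) (s : state) : Prop :=
  game_over H1 H2 s \/
  match t with
  | 0 => False
  | t'.+1 => exists u v : nat, u < v /\ unselected s u v /\
              forall c : bool, builder_wins H1 H2 t' ((u, v, c) :: s)
  end.

Definition online_ramsey_le (H1 H2 : graph_family) (t : nat) : Prop :=
  builder_wins H1 H2 t [::].

Definition cycle_adj (k : nat) : rel 'I_k :=
  fun i j => (j == (i.+1 %% k) :> nat) || (i == (j.+1 %% k) :> nat).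

Definition C_odd : graph_family :=
  fun k adj => [/\ odd k, 3 <= k & adj = @cycle_adj k].

Definition num_edges (k : nat) (adj : rel 'I_k) : nat :=
  #|[set p : 'I_k * 'I_k | (p.1 < p.2) && adj p.1 p.2]|.

Definition connected_graph (k : nat) (adj : rel 'I_k) : Prop :=
  forall i j : 'I_k, connect adj i j.

Definition Con (n m : nat) : graph_family :=
  fun k adj => [/\ k = n, simple_graph adj, connected_graph adj & m <= num_edges adj].

(* Main.v *)
Require Import Defs.
From Stdlib Require Import Reals Lra.
From mathcomp Require Import all_boot zify.
Set Implicit Arguments. Unset Strict Implicit. Unset Printing Implicit Defensive.


Notation red s x y := (has_edge s true x y).
Notation blue s x y := (has_edge s false x y).

Lemma has_edgeC s c x y : has_edge s c x y = has_edge s c y x.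
Proof. by rewrite /has_edge minnC maxnC. Qed.

Lemma has_edge_cons e s c x y :
  has_edge (e :: s) c x y = (e == (minn x y, maxn x y, c)) || has_edge s c x y.
Proof. by rewrite /has_edge in_cons eq_sym. Qed.

Lemma has_edge_sub s s' c x y : {subset s <= s'} -> has_edge s c x y -> has_edge s' c x y.
Proof. by move=> H; apply: H. Qed.

Lemma has_copy_sub H s s' c : {subset s <= s'} -> has_copy H s c -> has_copy H s' c.
Proof.
move=> Hs [k [adj [HH [f [Hf Hadj]]]]]; exists k, adj; split => //; exists f; split => //.
by move=> i j /Hadj; apply: has_edge_sub.
Qed.

Lemma go_bw H1 H2 t s : game_over H1 H2 s -> builder_wins H1 H2 t s.
Proof. by case: t => [|t] /= H; left. Qed.

Lemma bw_mono H1 H2 t t' s : t <= t' -> builder_wins H1 H2 t s -> builder_wins H1 H2 t' s.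
Proof.
elim: t t' s => [|t IH] t' s Ht.
  by case=> // H; apply: go_bw.
case: t' Ht => // t' Ht.
case=> [H|[u [v [Huv [Hun Hc]]]]]; first by left.
right; exists u, v; do 2!split => //.
by move=> c; apply: IH (Hc c).
Qed.

Lemma query H1 H2 t s x y : x != y -> ~~ red s x y -> ~~ blue s x y ->
  (forall c, builder_wins H1 H2 t ((minn x y, maxn x y, c) :: s)) ->
  builder_wins H1 H2 t.+1 s.
Proof.
move=> Hxy Hr Hb Hc /=; right; exists (minn x y), (maxn x y); split.
  by move: Hxy => /eqP Hxy; lia.
by split => //; rewrite /unselected; apply/andP.
Qed.

Lemma minmax_eq x y u v : (minn x y, maxn x y) = (minn u v, maxn u v) ->
  (x = u /\ y = v) \/ (x = v /\ y = u).
Proof.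
case=> H1 H2; have H3 := addn_min_max x y; have H4 := addn_min_max u v.
rewrite H1 H2 in H3.
case: (leqP x y) H1 H2 H3 => Hxy; case: (leqP u v) => Huv;
  rewrite ?(minn_idPl Hxy) ?(maxn_idPr Hxy) ?(minn_idPl Huv) ?(maxn_idPr Huv)
          ?(minn_idPr (ltnW Hxy)) ?(maxn_idPl (ltnW Hxy))
          ?(minn_idPr (ltnW Huv)) ?(maxn_idPl (ltnW Huv)); lia.
Qed.

Lemma minmax_eq1 h a b : (minn h a, maxn h a) = (minn h b, maxn h b) -> a = b.
Proof. by case/minmax_eq => [[_ ->]|[-> ->]]. Qed.

Lemma odd_cycle s a p : path (has_edge s true) a p -> uniq (a :: p) ->
  ~~ odd (size p) -> p != [::] -> red s (last a p) a -> has_copy C_odd s true.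
Proof.
move=> Hp Hu Hodd Hne Hcl.
set k := (size p).+1.
have Hk3 : 3 <= k.
  rewrite /k; case: p Hp Hu Hodd Hne {Hcl k} => [|x [|y q]] //=.
have Hsz : size (a :: p) = k by [].
exists k, (@cycle_adj k); split; first by split => //; rewrite /k /= Hodd.
exists (fun i : 'I_k => nth 0 (a :: p) i); split.
  move=> i j /eqP; rewrite nth_uniq ?Hsz // => /eqP; exact: val_inj.
have step : forall i : 'I_k, red s (nth 0 (a :: p) i) (nth 0 (a :: p) (i.+1 %% k)).
  move=> [i Hi] /=.
  case: (ltngtP i.+1 k) => Hik; last 2 first.
  - by exfalso; lia.
  - rewrite Hik modnn /=.
    have -> : i = (size (a :: p)).-1 by rewrite Hsz -Hik.
    by rewrite nth_last.
  rewrite modn_small //=.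
  by move/(pathP 0): Hp; apply; rewrite -ltnS.
move=> i j /orP [/eqP Hj|/eqP Hi].
  by have := step i; rewrite -Hj.
by rewrite has_edgeC; have := step j; rewrite -Hi.
Qed.

Section Count.
Variable N : nat.
Implicit Types r : rel 'I_N.

Definition sw (p : 'I_N * 'I_N) := (p.2, p.1).
Lemma sw_inj : injective sw.
Proof. by apply: (can_inj (g := sw)) => [[]]. Qed.

Lemma sym_count r : symmetric r ->
  #|[set p : 'I_N * 'I_N | r p.1 p.2]| =
  2 * #|[set p : 'I_N * 'I_N | (p.1 < p.2) && r p.1 p.2]|
  + #|[set p : 'I_N * 'I_N | (p.1 == p.2) && r p.1 p.2]|.
Proof.
move=> Hs.
rewrite -(cardsID [set p : 'I_N * 'I_N | p.1 < p.2]).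
rewrite -(cardsID [set p : 'I_N * 'I_N | p.1 == p.2] (_ :\: _)).
have E1 : [set p : 'I_N * 'I_N | r p.1 p.2] :&: [set p : 'I_N * 'I_N | p.1 < p.2] =
          [set p : 'I_N * 'I_N | (p.1 < p.2) && r p.1 p.2].
  by apply/setP => p; rewrite !inE andbC.
have E2 : ([set p : 'I_N * 'I_N | r p.1 p.2] :\: [set p : 'I_N * 'I_N | p.1 < p.2]) :&: [set p : 'I_N * 'I_N | p.1 == p.2]
     = [set p : 'I_N * 'I_N | (p.1 == p.2) && r p.1 p.2].
  apply/setP => p; rewrite !inE; case: eqP => [->|]; rewrite ?ltnn ?andbF ?andbT //.
have E3 : ([set p : 'I_N * 'I_N | r p.1 p.2] :\: [set p : 'I_N * 'I_N | p.1 < p.2]) :\: [set p : 'I_N * 'I_N | p.1 == p.2]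
     = sw @^-1: [set p : 'I_N * 'I_N | (p.1 < p.2) && r p.1 p.2].
  apply/setP => [[i j]]; rewrite !inE /sw /= Hs.
  case: (ltngtP i j) => H /=.
  - by rewrite andbF.
  - by case: eqP H => // ->; rewrite ltnn.
  - by rewrite (val_inj H) eqxx.
rewrite E1 E2 E3 card_preimset; last exact: sw_inj.
by rewrite addnCA addnn -mul2n addnC.
Qed.

Lemma card_diag : #|[set p : 'I_N * 'I_N | p.1 == p.2]| = N.
Proof.
have -> : [set p : 'I_N * 'I_N | p.1 == p.2] = [set (i, i) | i : 'I_N].
  apply/setP => [[i j]]; rewrite !inE /=; apply/eqP/imsetP => [->|[k _ [-> ->]]] //.
  by exists j.
by rewrite card_imset ?card_ord // => i j [].
Qed.

Lemma card_lt : 2 * #|[set p : 'I_N * 'I_N | p.1 < p.2]| + N = N * N.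
Proof.
have := sym_count (r := fun _ _ => true) (fun _ _ => erefl).
have E : forall P : pred ('I_N * 'I_N), [set p | P p && true] = [set p | P p].
  by move=> P; apply/setP => p; rewrite !inE andbT.
rewrite !E card_diag => <-.
have -> : [set p : 'I_N * 'I_N | true] = setT by apply/setP => p; rewrite !inE.
by rewrite cardsT card_prod card_ord.
Qed.

Lemma card_cross (par : 'I_N -> bool) :
  4 * #|[set p : 'I_N * 'I_N | (p.1 < p.2) && (par p.1 != par p.2)]| <= N * N.
Proof.
have Hs : symmetric (fun i j : 'I_N => par i != par j) by move=> i j /=; rewrite eq_sym.
have := @sym_count _ Hs.
have E0 : [set p : 'I_N * 'I_N | (p.1 == p.2) && (par p.1 != par p.2)] = set0.
  by apply/setP => p; rewrite !inE; case: eqP => //= ->; rewrite eqxx.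
rewrite E0 cards0 addn0 => H.
set A := [set i | par i].
have E : [set p : 'I_N * 'I_N | par p.1 != par p.2] = setX A (~: A) :|: setX (~: A) A.
  by apply/setP => p; rewrite !inE; case: (par p.1); case: (par p.2).
have D : setX A (~: A) :&: setX (~: A) A = set0.
  by apply/setP => p; rewrite !inE; case: (par p.1); case: (par p.2).
move: H; rewrite E cardsU D cards0 subn0 !cardsX.
have := cardsC A; rewrite card_ord => HC H.
have HH : forall a b c n : nat, a + b = n -> a * b + b * a = 2 * c -> 4 * c <= n * n.
  move=> a b c n <- E1; case: (leqP a b) => Hab.
    have [k Hk] : exists k, b = a + k by exists (b - a); lia.
    subst; nia.
  have [k Hk] : exists k, a = b + k by exists (a - b); lia.
  subst; nia.
exact: HH HC H.
Qed.

Lemma exhaust d (bl q cr : rel 'I_N) (par : 'I_N -> bool) :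
  4 * (N + d) <= N ^ 2 ->
  (forall i j, q i j -> ~~ bl i j -> par i != par j) ->
  (forall i j, cr i j -> par i != par j) ->
  #|[set p : 'I_N * 'I_N | (p.1 < p.2) && bl p.1 p.2]| < d ->
  exists i j : 'I_N, [/\ i < j, ~~ q i j & ~~ cr i j].
Proof.
move=> HN Hq Hcr Hb.
case: (boolP [exists i : 'I_N, exists j : 'I_N, [&& i < j, ~~ q i j & ~~ cr i j]]).
  by case/existsP => i /existsP [j /and3P [H1 H2 H3]]; exists i, j.
rewrite negb_exists => /forallP H.
have Hij : forall i j : 'I_N, i < j -> par i == par j -> bl i j.
  move=> i j Hlt He; move: (H i); rewrite negb_exists => /forallP /(_ j).
  rewrite Hlt /= negb_and !negbK => /orP [Hqq|Hc].
    by apply/negPn/negP => Hn; move: (Hq _ _ Hqq Hn); rewrite He.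
  by move: (Hcr _ _ Hc); rewrite He.
have Hsub : [set p : 'I_N * 'I_N | p.1 < p.2] \subset
   [set p : 'I_N * 'I_N | (p.1 < p.2) && bl p.1 p.2] :|:
   [set p : 'I_N * 'I_N | (p.1 < p.2) && (par p.1 != par p.2)].
  apply/subsetP => p; rewrite !inE => Hp; rewrite Hp /=.
  case: (boolP (par p.1 == par p.2)) => He; first by rewrite Hij.
  by apply/orP; right.
have := subset_leq_card Hsub; rewrite cardsU => H2.
have H3 := card_lt; have H4 := card_cross par.
move: HN; rewrite expnS expn1 => HN.
nia.
Qed.

End Count.

Section ConCopy.
Variables (N : nat) (h : nat) (g : nat -> nat).

Definition bcount s := #|[set p : 'I_N * 'I_N | (p.1 < p.2) && blue s (g p.1) (g p.2)]|.

Lemma con_copy s m :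
  (forall i : 'I_N, g i != h) -> injective (fun i : 'I_N => g i) ->
  (forall i : 'I_N, blue s h (g i)) -> m <= N + bcount s ->
  has_copy (Con N.+1 m) s false.
Proof.
move=> Hgh Hinj Hhub Hm.
pose f (a : 'I_N.+1) := if unlift ord0 a is Some i then g i else h.
pose adj := fun a b : 'I_N.+1 => (a != b) && [|| a == ord0, b == ord0 | blue s (f a) (f b)].
have fl : forall i : 'I_N, f (lift ord0 i) = g i by move=> i; rewrite /f liftK.
have f0 : f ord0 = h by rewrite /f unlift_none.
exists N.+1, adj; split; last first.
  exists f; split.
    move=> a b; rewrite /f.
    case: (unliftP ord0 a) => [i ->|->]; case: (unliftP ord0 b) => [j ->|->] //.
    - by move/Hinj => ->.
    - by move=> E; move: (Hgh i); rewrite E eqxx.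
    - by move=> E; move: (Hgh j); rewrite E eqxx.
  move=> a b /andP [Hab /or3P [/eqP Ha|/eqP Hb|//]].
    subst a; rewrite f0; case: (unliftP ord0 b) Hab => [j ->|->]; last by rewrite eqxx.
    by rewrite fl.
  subst b; rewrite f0 has_edgeC; case: (unliftP ord0 a) Hab => [j ->|->]; last by rewrite eqxx.
  by rewrite fl.
split => //.
- split.
    move=> a b; rewrite /adj eq_sym; congr (_ && _).
    by rewrite orbA (orbC (a == ord0)) -orbA has_edgeC.
  by move=> a; rewrite /adj eqxx.
- have Ha0 : forall a, connect adj a ord0.
    move=> a; case: (a =P ord0) => [->|/eqP Ha]; first exact: connect0.
    by apply: connect1; rewrite /adj Ha orbT.
  move=> a b; apply: connect_trans (Ha0 a) _.
  case: (b =P ord0) => [->|/eqP Hb]; first exact: connect0.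
  by apply: connect1; rewrite /adj eq_sym Hb.
- rewrite /num_edges.
  pose S1 := [set ((ord0 : 'I_N.+1), lift ord0 i) | i : 'I_N].
  pose S2 := [set (lift ord0 p.1, lift ord0 p.2) | p in [set p : 'I_N * 'I_N | (p.1 < p.2) && blue s (g p.1) (g p.2)]].
  have HS : S1 :|: S2 \subset [set p : 'I_N.+1 * 'I_N.+1 | (p.1 < p.2) && adj p.1 p.2].
    apply/subsetP => p; rewrite !inE => /orP [/imsetP [i _ ->]|/imsetP [q Hq ->]] /=.
      by rewrite /adj eqxx.
    move: Hq; rewrite !inE => /andP [Hlt Hbl].
    rewrite /bump /= !add1n ltnS Hlt /adj !fl Hbl !orbT andbT (inj_eq (@lift_inj _ ord0)).
    by apply: contraTneq Hlt => ->; rewrite ltnn.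
  have HD : S1 :&: S2 = set0.
    apply/setP => p; rewrite !inE; apply/negP => /andP [/imsetP [i _ ->] /imsetP [q _ [E _]]].
    by move: E; rewrite /bump /= add1n.
  have H1 : #|S1| = N.
    by rewrite card_imset ?card_ord // => i j [E]; apply: val_inj; move: E; rewrite !add0n.
  have H2 : #|S2| = bcount s.
    rewrite card_imset //.
    move=> [i1 i2] [j1 j2] [E1 E2]; congr pair; apply: val_inj.
      by move: E1; rewrite !add0n.
    by move: E2; rewrite !add0n.
  have := subset_leq_card HS; rewrite cardsU HD cards0 subn0 H1 H2.
  by apply: leq_trans.
Qed.

End ConCopy.

Section Paths.
Variable N : nat.

Definition pathok s (lab : nat -> 'I_N) (par : nat -> bool) a b p :=
  [/\ path (has_edge s true) a p, last a p = b, uniq (a :: p),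
      all (fun w => lab w == lab a) p & odd (size p) = (par a != par b)].

Lemma pathok_sub s s' lab par a b p : {subset s <= s'} ->
  pathok s lab par a b p -> pathok s' lab par a b p.
Proof.
move=> Hs [H1 H2 H3 H4 H5]; split => //.
by apply: sub_path H1 => x y; apply: has_edge_sub.
Qed.

Lemma join_path (R : rel nat) a x y b p1 p2 :
  path R a p1 -> last a p1 = x -> R x y -> path R y p2 -> last y p2 = b ->
  path R a (p1 ++ y :: p2) /\ last a (p1 ++ y :: p2) = b.
Proof.
move=> H1 H2 H3 H4 H5; rewrite cat_path last_cat H2 /= H1 H3 H4; split => //.
Qed.

Lemma join_uniq (lab : nat -> 'I_N) a y p1 p2 l1 l2 :
  uniq (a :: p1) -> uniq (y :: p2) ->
  (forall w, w \in a :: p1 -> lab w = l1) -> (forall w, w \in y :: p2 -> lab w = l2) ->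
  l1 != l2 -> uniq (a :: p1 ++ y :: p2).
Proof.
move=> U1 U2 L1 L2 Hl; rewrite -cat_cons cat_uniq U1 U2 andbT andTb.
apply/hasPn => w Hw; apply/negP => Hw'.
by move: Hl; rewrite -(L1 _ Hw') -(L2 _ Hw) eqxx.
Qed.

End Paths.

Section Phase2.
Variables (N d m h : nat) (g : nat -> nat).
Hypotheses (HN : 4 * (N + d) <= N ^ 2) (Hm : m <= N + d)
  (Hgh : forall i : 'I_N, g i != h) (Hinj : injective (fun i : 'I_N => g i)).

Definition Inv s (lab : nat -> 'I_N) par :=
  (forall i j : 'I_N, red s (g i) (g j) -> lab (g i) = lab (g j) /\ par (g i) != par (g j)) /\
  (forall i j : 'I_N, lab (g i) = lab (g j) -> exists p, pathok s lab par (g i) (g j) p).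

Definition img (lab : nat -> 'I_N) := #|[set lab (g i) | i : 'I_N]|.

Section Merge.
Variables (s : state) (lab : nat -> 'I_N) (par : nat -> bool) (i j : 'I_N).
Let u := g i.
Let v := g j.
Let lu := lab u.
Let lv := lab v.
Definition lab' w := if lab w == lv then lu else lab w.
Definition par' w := if lab w == lv then par w (+) (par u == par v) else par w.
Let s' := (minn u v, maxn u v, true) :: s.

Hypothesis Hl : lu != lv.
Hypothesis HI : Inv s lab par.

Lemma img_merge : img lab' < img lab.
Proof.
rewrite /img (cardsD1 lv [set lab (g k) | k : 'I_N]).
have -> : lv \in [set lab (g k) | k : 'I_N] by apply/imsetP; exists j.
rewrite add1n ltnS; apply: subset_leq_card; apply/subsetP => x /imsetP [k _ ->].
rewrite /lab'; case: eqP => [_|/eqP Hk]; rewrite !inE.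
  by rewrite Hl; apply/imsetP; exists i.
by rewrite Hk; apply/imsetP; exists k.
Qed.

Lemma sub_s' : {subset s <= s'}.
Proof. by move=> e He; rewrite /s' in_cons He orbT. Qed.

Lemma red_s' x y : red s' x y -> red s x y \/ (x = u /\ y = v) \/ (x = v /\ y = u).
Proof.
rewrite /s' has_edge_cons => /orP [/eqP [E1 E2]|]; last by left.
by right; apply: minmax_eq; rewrite E1 E2.
Qed.

Lemma red_uv : red s' v u.
Proof. by rewrite /s' has_edge_cons minnC maxnC eqxx. Qed.

Lemma red_vu : red s' u v.
Proof. by rewrite /s' has_edge_cons eqxx. Qed.

Lemma lab'_lu w : lab w = lu \/ lab w = lv -> lab' w = lu.
Proof. by rewrite /lab'; case=> ->; rewrite ?eqxx // (negbTE Hl). Qed.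

Lemma merge_inv : Inv s' lab' par'.
Proof.
case: HI => HR HP; split.
  move=> a b /red_s' [/HR [E1 E2]|[[Ea Eb]|[Ea Eb]]].
  - rewrite /lab' /par' E1; case: eqP => _ //; split => //.
    by move: E2; case: (par (g a)); case: (par (g b)); case: (par u == par v).
  - rewrite Ea Eb /lab' /par' -/lu -/lv eqxx (negbTE Hl); split => //.
    by case: (par u); case: (par v).
  - rewrite Ea Eb /lab' /par' -/lu -/lv eqxx (negbTE Hl); split => //.
    by case: (par u); case: (par v).
move=> a b Hab.
have Lo : forall w, lab w != lv -> lab' w = lab w by move=> w Hw; rewrite /lab' (negbTE Hw).
have Hsub := (fun x y => @has_edge_sub s s' true x y sub_s').
case: (boolP (lab (g a) == lv)) => Ha; case: (boolP (lab (g b) == lv)) => Hb.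
- have [p [P1 P2 P3 P4 P5]] := HP a b (etrans (eqP Ha) (esym (eqP Hb))).
  exists p; split => //.
  + exact: sub_path P1.
  + apply/allP => w Hw; move/allP: P4 => /(_ w Hw) /eqP E.
    by rewrite (lab'_lu (or_intror (etrans E (eqP Ha)))) (lab'_lu (or_intror (eqP Ha))).
  + by rewrite P5 /par' Ha Hb; case: (par (g a)); case: (par (g b)); case: (par u == par v).
- move: Hab; rewrite (lab'_lu (or_intror (eqP Ha))) Lo // => Eb.
  have La : lab' (g a) = lu by apply: lab'_lu; right; apply/eqP.
  have [p1 [P1 P2 P3 P4 P5]] := HP a j (eqP Ha).
  have [p2 [Q1 Q2 Q3 Q4 Q5]] := HP i b Eb.
  have [J1 J2] := join_path (sub_path Hsub P1) P2 red_uv (sub_path Hsub Q1) Q2.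
  exists (p1 ++ u :: p2); split => //.
  + apply: (join_uniq (lab := lab) (l1 := lv) (l2 := lu)) => //; last by rewrite eq_sym.
      move=> w; rewrite in_cons => /orP [/eqP ->|Hw]; first exact/eqP.
      by move/allP: P4 => /(_ w Hw) /eqP ->; exact/eqP.
    move=> w; rewrite in_cons => /orP [/eqP ->|Hw]; first by [].
    by move/allP: Q4 => /(_ w Hw) /eqP ->.
  + apply/allP => w; rewrite La mem_cat in_cons => /or3P [Hw|/eqP ->|Hw]; apply/eqP; apply: lab'_lu.
    * by move/allP: P4 => /(_ w Hw) /eqP ->; right; apply/eqP.
    * by left.
    * by move/allP: Q4 => /(_ w Hw) /eqP ->; left.
  + rewrite size_cat /= addnS oddS oddD P5 Q5 /par' Ha (negbTE Hb).
    by case: (par (g a)); case: (par (g b)); case: (par u); case: (par v).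
- move: Hab; rewrite (lab'_lu (or_intror (eqP Hb))) Lo // => Ea.
  have La : lab' (g a) = lu by rewrite Lo.
  have [p1 [P1 P2 P3 P4 P5]] := HP a i Ea.
  have [p2 [Q1 Q2 Q3 Q4 Q5]] := HP j b (esym (eqP Hb)).
  have [J1 J2] := join_path (sub_path Hsub P1) P2 red_vu (sub_path Hsub Q1) Q2.
  exists (p1 ++ v :: p2); split => //.
  + apply: (join_uniq (lab := lab) (l1 := lu) (l2 := lv)) => //.
      move=> w; rewrite in_cons => /orP [/eqP ->|Hw]; first by [].
      by move/allP: P4 => /(_ w Hw) /eqP ->.
    move=> w; rewrite in_cons => /orP [/eqP ->|Hw]; first by [].
    by move/allP: Q4 => /(_ w Hw) /eqP ->; exact/eqP.
  + apply/allP => w; rewrite La mem_cat in_cons => /or3P [Hw|/eqP ->|Hw]; apply/eqP; apply: lab'_lu.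
    * by move/allP: P4 => /(_ w Hw) /eqP ->; left.
    * by right.
    * by move/allP: Q4 => /(_ w Hw) /eqP ->; right; apply/eqP.
  + rewrite size_cat /= addnS oddS oddD P5 Q5 /par' Hb (negbTE Ha).
    by case: (par (g a)); case: (par (g b)); case: (par u); case: (par v).
- move: Hab; rewrite !Lo // => E.
  have [p [P1 P2 P3 P4 P5]] := HP a b E.
  exists p; split => //.
  + exact: sub_path P1.
  + apply/allP => w Hw; move/allP: P4 => /(_ w Hw) /eqP E'.
    by rewrite !Lo // E'.
  + by rewrite P5 /par' (negbTE Ha) (negbTE Hb).
Qed.

End Merge.

Lemma phase2 t : forall s lab par, Inv s lab par -> (forall i : 'I_N, blue s h (g i)) ->
  img lab + (d - bcount N g s) <= t.+1 -> builder_wins C_odd (Con N.+1 m) t s.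
Proof.
elim: t => [|t IH] s lab par HI Hhub Hb;
  (case: (leqP d (bcount N g s)) => Hd; first by apply: go_bw; right; apply: con_copy => //; lia);
  case: (HI) => HR HP;
  (have [i [j [Hij Hq Hcr]]] := exhaust (bl := fun i j => blue s (g i) (g j))
      (q := fun i j => red s (g i) (g j) || blue s (g i) (g j))
      (cr := fun i j => (lab (g i) == lab (g j)) && (par (g i) != par (g j)))
      (par := fun i => par (g i)) HN
      (fun i j Hq Hnb => ltac:(move: Hq; rewrite (negbTE Hnb) orbF => /HR []; done))
      (fun i j Hc => ltac:(by case/andP: Hc)) Hd);
  (have Himg : 0 < img lab by rewrite /img card_gt0; apply/set0Pn; exists (lab (g i)); apply/imsetP; exists i).
  by exfalso; lia.
have Huv : g i != g j.
  by apply/eqP => /Hinj E; move: Hij; rewrite E ltnn.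
move: Hq; rewrite negb_or => /andP [Hr Hbl].
apply: (query Huv Hr Hbl) => c.
set s' := (_, _, c) :: s.
have Hsub : {subset s <= s'} by move=> e He; rewrite /s' in_cons He orbT.
have Hhub' : forall k : 'I_N, blue s' h (g k) by move=> k; apply: has_edge_sub (Hhub k).
have Hb' : bcount N g s <= bcount N g s'.
  apply: subset_leq_card; apply/subsetP => p; rewrite !inE => /andP [-> H] /=.
  exact: has_edge_sub H.
case: c @s' Hsub Hhub' Hb' => s' Hsub Hhub' Hb'.
- case: (boolP (lab (g i) == lab (g j))) => Hl.
  + have Hp : par (g i) = par (g j).
      by apply/eqP; move: Hcr; rewrite /= Hl /= negbK.
    have [p [P1 P2 P3 P4 P5]] := HP i j (eqP Hl).
    apply: go_bw; left; apply: (@odd_cycle _ (g i) p).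
    * by apply: sub_path P1 => x y; apply: has_edge_sub.
    * exact: P3.
    * by rewrite P5 Hp eqxx.
    * by apply/eqP => E; move: P2 Huv; rewrite E /= => ->; rewrite eqxx.
    * by rewrite P2 /s' has_edge_cons minnC maxnC eqxx.
  + apply: (IH _ _ _ (merge_inv Hl HI) Hhub').
    have := img_merge Hl; move: Hb'; rewrite /s'; lia.
- have Hred : forall x y, red s' x y -> red s x y.
    by move=> x y; rewrite /s' has_edge_cons => /orP [/eqP E|//]; case: E.
  apply: (IH _ lab par) Hhub' _.
    split.
      by move=> a b /Hred /HR.
    move=> a b /HP [p Hp]; exists p; exact: pathok_sub Hp.
  have : bcount N g s < bcount N g s'.
    rewrite /bcount (cardsD1 (i, j) [set p : 'I_N * 'I_N | _ && blue s' _ _]).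
    rewrite !inE /= Hij /s' has_edge_cons eqxx /= add1n ltnS.
    apply: subset_leq_card; apply/subsetP => p; rewrite !inE => /andP [Hlt Hb1].
    rewrite Hlt /s' has_edge_cons (has_edge_sub _ Hb1) ?orbT ?andbT //.
    by apply/eqP => E; move: Hb1 Hbl; rewrite E => ->.
  lia.
Qed.

End Phase2.

Lemma star H2 h t ys : forall s, uniq (h :: ys) ->
  (forall y, y \in ys -> ~~ red s h y && ~~ blue s h y) ->
  (forall y, y \in ys -> exists p, [/\ path (has_edge s true) h p, last h p = y,
        uniq (h :: p), ~~ odd (size p) & p != [::]]) ->
  (forall s', {subset s <= s'} -> (forall x y, red s' x y -> red s x y) ->
        (forall y, y \in ys -> blue s' h y) -> builder_wins C_odd H2 t s') ->
  builder_wins C_odd H2 (size ys + t) s.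
Proof.
elim: ys => [|y ys IH] s Hu Hq Hp K.
  by apply: K => // x y; rewrite in_nil.
rewrite addSn.
have Hhy : h != y by move: Hu; rewrite /= in_cons negb_or => /andP [/andP [] ] .
have /andP [Hr Hb] := Hq y (mem_head _ _).
apply: (query Hhy Hr Hb) => c.
set s1 := (_, _, c) :: s.
have Hsub : {subset s <= s1} by move=> e He; rewrite /s1 in_cons He orbT.
case: c @s1 Hsub => s1 Hsub.
  have [p [P1 P2 P3 P4 P5]] := Hp y (mem_head _ _).
  apply: go_bw; left; apply: (@odd_cycle _ h p) => //.
    by apply: sub_path P1 => a b; apply: has_edge_sub.
  by rewrite P2 /s1 has_edge_cons minnC maxnC eqxx.
have Hred : forall a b, red s1 a b -> red s a b.
  by move=> a b; rewrite /s1 has_edge_cons => /orP [/eqP E|//]; case: E.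
apply: IH.
- by move: Hu; rewrite /= in_cons negb_or => /andP [/andP [_ ->]] /andP [].
- move=> y' Hy'; have /andP [Hr' Hb'] := Hq y' (introT orP (or_intror Hy')).
  apply/andP; split.
    by apply/negP => /Hred; apply/negP.
  rewrite /s1 has_edge_cons negb_or Hb' andbT.
  apply/eqP => [[E1 E2]].
  have Eyy := minmax_eq1 (f_equal2 pair E1 E2).
  by move: Hu => /= /andP [_ /andP [Hyn _]]; move: Hyn; rewrite Eyy Hy'.

- move=> y' Hy'; have [p [P1 P2 P3 P4 P5]] := Hp y' (introT orP (or_intror Hy')).
  exists p; split => //; apply: sub_path P1 => a b; apply: has_edge_sub Hsub.
- move=> s' Hs' Hr' Hb'; apply: K.
  + by move=> e He; apply: Hs'; apply: Hsub.
  + by move=> a b /Hr' /Hred.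
  + move=> y'; rewrite in_cons => /orP [/eqP ->|]; last exact: Hb'.
    by apply: Hs'; rewrite /s1 /has_edge in_cons eqxx.
Qed.

Section Main.
Variables (N d m : nat).
Hypotheses (HN : 4 * (N + d) <= N ^ 2) (Hm : m <= N + d) (HN0 : 0 < N).
Local Notation BW := (builder_wins C_odd (Con N.+1 m)).

Definition PH1 (s : state) k (xs bs : seq nat) :=
  [/\ uniq (xs ++ bs), size xs + size bs = k, (forall x, x \in xs ++ bs -> 0 < x <= k),
      (forall x, (x \in xs -> (0, x, false) \in s) /\ (x \in bs -> (0, x, true) \in s))
    & (forall e, e \in s -> (e.1.1 == 0) && (e.1.2 <= k))].

Lemma ph1_zero s k xs bs c x y : PH1 s k xs bs -> has_edge s c x y -> x = 0 \/ y = 0.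
Proof.
case=> _ _ _ _ He /He /andP [H _]; move: H => /= /eqP H; lia.
Qed.

Let i0 : 'I_N := Ordinal HN0.

Lemma caseX s k xs bs t : PH1 s k xs bs -> size xs = N -> N + d <= t -> BW t s.
Proof.
move=> HP Hsz Ht; have [Hu _ Hpos Hxb _] := HP.
have Hx : forall x, x \in xs -> (0, x, false) \in s by move=> x; case: (Hxb x).
have Hu1 : uniq xs by move: Hu; rewrite cat_uniq => /andP [].
pose g w := nth 0 xs w.
have Hgx : forall i : 'I_N, g i \in xs by move=> i; rewrite mem_nth // Hsz.
have Hg0 : forall i : 'I_N, 0 < g i.
  by move=> i; have /andP [] := Hpos (g i) ltac:(by rewrite mem_cat Hgx).
have Hinj : injective (fun i : 'I_N => g i).
  move=> i j /eqP; rewrite nth_uniq ?Hsz // => /eqP; exact: val_inj.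
pose lab w := insubd i0 (index w xs).
have Hlab : forall i : 'I_N, lab (g i) = i.
  by move=> i; apply: val_inj; rewrite val_insubd index_uniq ?Hsz // ltn_ord.
apply: (@phase2 N d m 0 g HN Hm _ Hinj t s lab (fun _ => false)).
- by move=> i; rewrite -lt0n.
- split.
    move=> i j /(ph1_zero HP) [] E; by move: (Hg0 i) (Hg0 j); rewrite E.
  move=> i j; rewrite !Hlab => ->; exists [::]; split => //.
- move=> i; have := Hx _ (Hgx i); rewrite /has_edge min0n max0n //.
- have : img g lab <= N by rewrite /img; apply: leq_trans (max_card _) _; rewrite card_ord.
  lia.
Qed.

Lemma caseB s k xs bs t : PH1 s k xs bs -> size bs = N.+1 -> N + d <= t -> BW t s.
Proof.
move=> HP Hsz Ht; have [Hu _ Hpos Hxb _] := HP.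
have Hb : forall x, x \in bs -> (0, x, true) \in s by move=> x; case: (Hxb x).
clear Hxb; case: bs Hsz Hu Hpos Hb HP => // h ys [Hsz] Hu Hpos Hb HP.
have Hu1 : uniq (h :: ys) by move: Hu; rewrite cat_uniq => /and3P [].
have Hpos' : forall x, x \in h :: ys -> 0 < x.
  by move=> x Hx; have /andP [] := Hpos x ltac:(by rewrite mem_cat Hx orbT).
have Hr0 : forall x, x \in h :: ys -> red s x 0.
  by move=> x Hx; rewrite /has_edge minn0 maxn0; apply: Hb.
have Hh0 : 0 < h by apply: Hpos'; rewrite mem_head.
have Hys : forall y, y \in ys -> y \in h :: ys by move=> y Hy; rewrite in_cons Hy orbT.
have -> : t = size ys + (t - N) by rewrite Hsz; lia.
apply: (@star _ h) => //.
- move=> y Hy; apply/andP; split; apply/negP => /(ph1_zero HP) [] E.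
  + by move: Hh0; rewrite E.
  + by move: (Hpos' y (Hys _ Hy)); rewrite E.
  + by move: Hh0; rewrite E.
  + by move: (Hpos' y (Hys _ Hy)); rewrite E.
- move=> y Hy; exists [:: 0; y]; split => //=.
  + by rewrite Hr0 ?mem_head //= has_edgeC Hr0 // Hys.
  + move: Hu1 => /= /andP [Hh _]; rewrite !in_cons !negb_or in_nil andbT.
    have Hhy : h != y by apply: (contraNneq _ Hh) => ->.
    by rewrite -lt0n Hh0 Hhy eq_sym -lt0n Hpos' ?Hys.
move=> s' Hs' Hred Hbl.
pose g w := nth 0 ys w.
have Hgx : forall i : 'I_N, g i \in ys by move=> i; rewrite mem_nth // Hsz.
have Hg0 : forall i : 'I_N, 0 < g i by move=> i; apply: Hpos'; apply: Hys.
have Hinj : injective (fun i : 'I_N => g i).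
  move=> i j /eqP; rewrite nth_uniq ?Hsz //; last by case/andP: Hu1.
  by move/eqP; exact: val_inj.
apply: (@phase2 N d m h g HN Hm _ Hinj _ s' (fun _ => i0) (fun w => w == 0)).
- move=> i; apply: contraTneq (Hgx i) => ->.
  by case/andP: Hu1.
- split.
    move=> i j /Hred /(ph1_zero HP) [] E; by move: (Hg0 i) (Hg0 j); rewrite E.
  move=> i j _; case: (eqVneq i j) => [->|Hij].
    by exists [::]; split => //=; rewrite eqxx.
  exists [:: 0; g j]; split => //=.
  + rewrite andbT; apply/andP; split; apply: (has_edge_sub Hs').
      by apply: Hr0; apply: Hys.
    by rewrite has_edgeC; apply: Hr0; apply: Hys.
    have Z : forall k' : 'I_N, (g k' == 0) = false by move=> k'; apply/negbTE; rewrite -lt0n.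
    by rewrite !inE negb_or Z (eq_sym 0) Z (inj_eq Hinj) Hij.
  + have Z : forall k' : 'I_N, (g k' == 0) = false by move=> k'; apply/negbTE; rewrite -lt0n.
    by rewrite !Z.
- by move=> i; apply: Hbl.
- have : img g (fun _ => i0) <= 1.
    rewrite /img (_ : [set i0 | i : 'I_N] = [set i0]) ?cards1 //.
    apply/setP => x; rewrite inE; apply/imsetP/eqP => [[? _ ->]|->] //.
    by exists i0.
  lia.
Qed.

Lemma ph1_blue s k xs bs : PH1 s k xs bs ->
  PH1 ((0, k.+1, false) :: s) k.+1 (k.+1 :: xs) bs.
Proof.
case=> Hu Hsz Hpos Hxb He.
have Hn : k.+1 \notin xs ++ bs by apply/negP => /Hpos; rewrite ltnn andbF.
split.
- by rewrite cat_cons /= Hn Hu.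
- by rewrite /= -Hsz.
- move=> x; rewrite cat_cons in_cons => /orP [/eqP -> /=|/Hpos /andP [H1 H2]]; first exact: leqnn.
  by rewrite H1 (leqW H2).
- move=> x; split => Hx; rewrite in_cons; apply/orP.
    move: Hx; rewrite in_cons => /orP [/eqP ->|Hx]; first by left.
    by right; case: (Hxb x) => + _; apply.
  by right; case: (Hxb x) => _; apply.
- move=> e; rewrite in_cons => /orP [/eqP -> /=|/He /andP [H1 H2]]; first exact: leqnn.
  by rewrite H1 (leqW H2).
Qed.

Lemma ph1_red s k xs bs : PH1 s k xs bs ->
  PH1 ((0, k.+1, true) :: s) k.+1 xs (k.+1 :: bs).
Proof.
case=> Hu Hsz Hpos Hxb He.
have Hn : k.+1 \notin xs ++ bs by apply/negP => /Hpos; rewrite ltnn andbF.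
split.
- have Hn' : k.+1 \notin bs ++ xs by rewrite mem_cat orbC -mem_cat.
  by rewrite uniq_catC cat_cons /= Hn' (uniq_catC bs) Hu.
- by rewrite /= addnS -Hsz.
- move=> x; rewrite mem_cat in_cons orbCA -mem_cat => /orP [/eqP -> /=|/Hpos /andP [H1 H2]]; first exact: leqnn.
  by rewrite H1 (leqW H2).
- move=> x; split => Hx; rewrite in_cons; apply/orP.
    by right; case: (Hxb x) => + _; apply.
  move: Hx; rewrite in_cons => /orP [/eqP ->|Hx]; first by left.
  by right; case: (Hxb x) => _; apply.
- move=> e; rewrite in_cons => /orP [/eqP -> /=|/He /andP [H1 H2]]; first exact: leqnn.
  by rewrite H1 (leqW H2).
Qed.

Lemma phase1 r : forall k xs bs s, k + r = 2 * N -> PH1 s k xs bs ->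
  size xs < N -> size bs <= N -> BW (3 * N + d - k) s.
Proof.
elim: r => [|r IH] k xs bs s Hkr HP Hx Hb.
  by exfalso; have [_ Hsz _ _ _] := HP; lia.
have [_ Hsz _ _ He] := HP.
have -> : 3 * N + d - k = (3 * N + d - k.+1).+1 by lia.
right; exists 0, k.+1; split => //; split.
  by rewrite /unselected; apply/andP; split; apply/negP => /He /andP [_]; rewrite /= ltnn.
case.
- have HP' := ph1_red HP.
  case: (ltngtP (size bs).+1 N.+1) => H.
  + apply: IH HP' Hx H; lia.
  + by exfalso; lia.
  + apply: caseB HP' H _; lia.
- have HP' := ph1_blue HP.
  case: (ltngtP (size xs).+1 N) => H.
  + apply: IH HP' H Hb; lia.
  + by exfalso; lia.
  + apply: caseX HP' H _; lia.
Qed.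

End Main.

Theorem theorem3 :
  exists C : R, Rlt (IZR 0) C /\
    forall n m : nat, 3 <= n -> n - 1 <= m -> 4 * m <= (n - 1) ^ 2 ->
      exists t : nat,
        Rle (INR t)
            (Rplus (Rplus (INR n) (Rmult (IZR 2) (INR m)))
                   (Rmult C (sqrt (Rplus (Rminus (INR m) (INR n)) (IZR 1))))) /\
        online_ramsey_le C_odd (Con n m) t.
Proof.
exists R1; split; first lra.
move=> n m Hn Hnm Hm4.
exists (n + 2 * m); split.
  have -> : INR (n + 2 * m) = Rplus (INR n) (Rmult 2 (INR m)).
    by rewrite -[n + 2 * m]/(Nat.add n (Nat.mul 2 m)) plus_INR mult_INR.
  have := sqrt_pos (Rplus (Rminus (INR m) (INR n)) 1); lra.
set N := n.-1; set d := m - N.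
have En : n = N.+1 by rewrite /N; lia.
have HN0 : 0 < N by rewrite /N; lia.
have HN : 4 * (N + d) <= N ^ 2.
  have -> : N + d = m by rewrite /d /N; lia.
  by move: Hm4; rewrite /N subn1.
have Hm : m <= N + d by rewrite /d; lia.
rewrite /online_ramsey_le En.
apply: (@bw_mono _ _ (3 * N + d - 0)); first lia.
apply: (@phase1 N d m HN Hm HN0 (2 * N) 0 [::] [::]) => //.
Qed.
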